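(* Suppose each population has a weakly dominating strategy, in the following sense: for population 1, either $a(r)\ge c(r)$ and $b(r)\ge d(r)$ for all $r\in[0,1]$ with both inequalities strict for all $r\in(0,1)$, or $c(r)\ge a(r)$ and $d(r)\ge b(r)$ for all $r\in[0,1]$ with both inequalities strict for all $r\in(0,1)$; and for population 2, either $e(r)\ge g(r)$ and $f(r)\ge k(r)$ for all $r\in[0,1]$ with both inequalities strict for all $r\in(0,1)$, or $g(r)\ge e(r)$ and $k(r)\ge f(r)$ for all $r\in[0,1]$ with both inequalities strict for all $r\in(0,1)$. Then for every initial condition $(x_0,y_0,r_0)\in(0,1)^3$, the solution $(x(t),y(t),r(t))$ of $(\ast)$ converges to the boundary of the cube $[0,1]^3$, i.e. its distance to $\partial[0,1]^3$ tends to $0$ as $t\to\infty$.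
   Context: Two-population co-evolutionary system. Let $a,b,c,d,e,f,g,k:[0,1]\to\mathbb{R}$ be affine functions of the environmental variable $r$. Population 1 has payoff matrix $A(r)=\begin{bmatrix}a(r)&b(r)\\ c(r)&d(r)\end{bmatrix}$, population 2 has payoff matrix $B(r)=\begin{bmatrix}e(r)&f(r)\\ g(r)&k(r)\end{bmatrix}$. Let $\theta_1,\theta_2>0$. The system $(\ast)$ on $[0,1]^3$ with state $(x,y,r)$ ($x$, $y$ the fractions of strategy 1 in populations 1 and 2, $r$ the environmental state) is $\dot x = x(1-x)F(y,r)$, $\dot y = y(1-y)G(x,r)$, $\dot r = r(1-r)H(x,y)$, where $F(y,r)=(a(r)-b(r)-c(r)+d(r))y+b(r)-d(r)$, $G(x,r)=(e(r)-f(r)-g(r)+k(r))x+f(r)-k(r)$, $H(x,y)=(1+\theta_1)x+(1+\theta_2)y-2$. *)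

(* Defs.v *)
From Stdlib Require Import Reals.
Open Scope R_scope.

Definition affine01 (f : R -> R) : Prop :=
  exists p q : R, forall r, 0 <= r <= 1 -> f r = p + q * r.

Definition weakly_dominant (a b c d : R -> R) : Prop :=
  ((forall r, 0 <= r <= 1 -> a r >= c r /\ b r >= d r) /\
   (forall r, 0 < r < 1 -> a r > c r /\ b r > d r))
  \/
  ((forall r, 0 <= r <= 1 -> c r >= a r /\ d r >= b r) /\
   (forall r, 0 < r < 1 -> c r > a r /\ d r > b r)).

Definition Ffun (a b c d : R -> R) (y r : R) : R :=
  (a r - b r - c r + d r) * y + b r - d r.

Definition Gfun (e f g k : R -> R) (x r : R) : R :=
  (e r - f r - g r + k r) * x + f r - k r.

Definition Hfun (th1 th2 x y : R) : R :=
  (1 + th1) * x + (1 + th2) * y - 2.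

(* Distance of a point of the cube [0,1]^3 to its boundary (sup-norm = Euclidean
   distance to the nearest face for points inside the cube). *)
Definition dist_bd (x y r : R) : R :=
  Rmin (Rmin (Rmin x (1 - x)) (Rmin y (1 - y))) (Rmin r (1 - r)).

(* Main.v *)
Require Import Defs.
From Stdlib Require Import Reals Lra Psatz Classical.
Open Scope R_scope.

Lemma cont_of_deriv f l t : derivable_pt_lim f t l ->
  forall eps, eps > 0 -> exists del, del > 0 /\
    forall u, Rabs (u - t) < del -> Rabs (f u - f t) < eps.
Proof.
  intros Hd eps He.
  assert (Hc : continuity_pt f t).
  { apply derivable_continuous_pt. exists l. exact Hd. }
  unfold continuity_pt, continue_in, limit1_in, limit_in in Hc.
  destruct (Hc eps He) as [alp [Ha H]].
  exists alp; split; auto. intros u Hu.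
  destruct (Req_dec u t) as [->|Hne].
  - unfold Rminus; rewrite Rplus_opp_r, Rabs_R0; lra.
  - apply (H u). split. split. exact I. auto. simpl. unfold R_dist. exact Hu.
Qed.

Lemma gron (u u' : R -> R) K T : 0 <= K -> 0 <= T ->
  (forall t, 0 <= t <= T -> derivable_pt_lim u t (u' t)) ->
  (forall t, 0 <= t <= T -> u' t >= - K * u t) -> u 0 > 0 -> u T > 0.
Proof.
  intros HK HT Hd Hb H0.
  destruct (Req_dec T 0) as [->|HT0]; auto.
  set (h := fun t => u t * exp (K * t)).
  set (h' := fun t => u' t * exp (K * t) + u t * (exp (K * t) * K)).
  assert (Hdh : forall t, 0 <= t <= T -> derivable_pt_lim h t (h' t)).
  { intros t Ht. unfold h, h'.
    apply (derivable_pt_lim_mult u (fun s => exp (K * s))); auto.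
    apply (derivable_pt_lim_comp (fun s => K * s) exp).
    - pose proof (derivable_pt_lim_scal id K t 1 (derivable_pt_lim_id t)) as HH.
      rewrite Rmult_1_r in HH. exact HH.
    - apply derivable_pt_lim_exp. }
  destruct (MVT_cor2 h h' 0 T ltac:(lra) Hdh) as [c [Hc Hct]].
  assert (Hh' : h' c >= 0).
  { unfold h'. specialize (Hb c ltac:(lra)). pose proof (exp_pos (K*c)). nra. }
  assert (h T > 0).
  { unfold h in *. rewrite Rmult_0_r, exp_0 in Hc. nra. }
  unfold h in H. pose proof (exp_pos (K*T)). nra.
Qed.

Lemma cont_ind (P : R -> Prop) :
  (forall t, 0 <= t -> (forall u, 0 <= u < t -> P u) -> P t) ->
  (forall t, 0 <= t -> P t -> exists del, del > 0 /\ forall u, t <= u < t + del -> P u) ->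
  forall t, 0 <= t -> P t.
Proof.
  intros Hb Hf t1 Ht1.
  destruct (classic (P t1)) as [|Hn]; auto. exfalso.
  set (E := fun s => 0 <= s <= t1 /\ forall u, 0 <= u <= s -> P u).
  assert (HP0 : P 0) by (apply Hb; [lra| intros; lra]).
  assert (HE0 : E 0) by (split; [lra| intros u Hu; replace u with 0 by lra; auto]).
  assert (Hbd : bound E) by (exists t1; intros s [Hs _]; lra).
  destruct (completeness E Hbd (ex_intro _ 0 HE0)) as [m [Hub Hl]].
  assert (Hm0 : 0 <= m) by (apply Hub; auto).
  assert (Hmt : m <= t1) by (apply Hl; intros s [Hs _]; lra).
  assert (Hlt : forall u, 0 <= u < m -> P u).
  { intros u Hu. destruct (classic (P u)) as [|Hnu]; auto.
    assert (Hup : is_upper_bound E u).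
    { intros s [Hs Hs2]. destruct (Rle_lt_dec s u); auto.
      exfalso. apply Hnu, Hs2; lra. }
    specialize (Hl u Hup). lra. }
  assert (HPm : P m) by (apply Hb; auto).
  assert (Hle : forall u, 0 <= u <= m -> P u).
  { intros u Hu. destruct (Req_dec u m) as [->|]; auto. apply Hlt; lra. }
  destruct (Req_dec m t1) as [<-|Hne]. { apply Hn, HPm. }
  destruct (Hf m Hm0 HPm) as [d [Hd Hd2]].
  set (s := Rmin (m + d/2) t1).
  assert (Es : E s).
  { split. unfold s; unfold Rmin; destruct Rle_dec; lra.
    intros u Hu. destruct (Rle_lt_dec u m). apply Hle; lra.
    apply Hd2. unfold s, Rmin in Hu; destruct Rle_dec in Hu; lra. }
  specialize (Hub s Es). unfold s, Rmin in Hub; destruct Rle_dec in Hub; lra.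
Qed.

Lemma coord_int (z Phi : R -> R) K T : 0 <= K -> 0 <= T ->
  (forall t, 0 <= t <= T -> derivable_pt_lim z t (z t * (1 - z t) * Phi t)) ->
  (forall t, 0 <= t <= T -> (0 <= z t <= 1 /\ - K <= Phi t <= K)) ->
  0 < z 0 < 1 -> 0 < z T < 1.
Proof.
  intros HK HT Hd Hb H0. split.
  - apply (gron z (fun t => z t * (1 - z t) * Phi t) K T); auto; try lra.
    intros t Ht. destruct (Hb t Ht) as [[h1 h2] [h3 h4]].
    assert (0 <= z t * (1 - z t)) by nra.
    assert (z t * (1 - z t) <= z t) by nra.
    nra.
  - assert (1 - z T > 0); [|lra].
    apply (gron (fun t => 1 - z t) (fun t => - (z t * (1 - z t) * Phi t)) K T); auto; try lra.
    + intros t Ht. 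
      pose proof (derivable_pt_lim_minus (fct_cte 1) z t 0 _ (derivable_pt_lim_const 1 t) (Hd t Ht)) as HH.
      replace (- (z t * (1 - z t) * Phi t)) with (0 - z t * (1 - z t) * Phi t) by ring.
      exact HH.
    + intros t Ht. destruct (Hb t Ht) as [[h1 h2] [h3 h4]].
      assert (0 <= z t * (1 - z t)) by nra.
      assert (z t * (1 - z t) <= 1 - z t) by nra.
      nra.
Qed.

Lemma aff_bound f : affine01 f -> exists B, 0 <= B /\ forall r, 0 <= r <= 1 -> - B <= f r <= B.
Proof.
  intros [p [q H]]. exists (Rabs p + Rabs q). split.
  pose proof (Rabs_pos p); pose proof (Rabs_pos q); lra.
  intros r Hr. rewrite H by auto.
  pose proof (Rle_abs p). pose proof (Rle_abs (-p)). rewrite Rabs_Ropp in H1.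
  pose proof (Rle_abs q). pose proof (Rle_abs (-q)). rewrite Rabs_Ropp in H3.
  split; nra.
Qed.

Lemma aff_sub f g s : affine01 f -> affine01 g -> affine01 (fun r => s * (f r - g r)).
Proof.
  intros [p [q H]] [p' [q' H']]. exists (s * (p - p')), (s * (q - q')).
  intros r Hr. rewrite H, H' by auto. ring.
Qed.

Lemma aff_min phi al r : affine01 phi -> 0 < al <= 1/2 -> al <= r <= 1 - al ->
  phi r >= Rmin (phi al) (phi (1 - al)).
Proof.
  intros [p [q H]] Ha Hr. rewrite !H by lra.
  unfold Rmin; destruct Rle_dec; destruct (Rle_lt_dec 0 q); nra.
Qed.

Lemma conv_bound y A B M : 0 <= y <= 1 -> - M <= A <= M -> - M <= B <= M ->
  - M <= y * A + (1 - y) * B <= M.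
Proof. intros; split; nra. Qed.

Lemma closure01 z l t : derivable_pt_lim z t l -> 0 < t ->
  (forall u, 0 <= u < t -> 0 < z u < 1) -> 0 <= z t <= 1.
Proof.
  intros Hd Ht H.
  destruct (Rle_lt_dec 0 (z t)) as [h|h];
   [destruct (Rle_lt_dec (z t) 1) as [h'|h']; [lra|exfalso]|exfalso].
  - destruct (cont_of_deriv z l t Hd (z t - 1) ltac:(lra)) as [d [Hd0 Hc]].
    set (u := Rmax 0 (t - d/2)).
    assert (0 <= u < t /\ Rabs (u - t) < d).
    { unfold u, Rmax; destruct Rle_dec; split; try split; try lra;
      rewrite Rabs_left1 by lra; lra. }
    destruct H0. specialize (H u H0). specialize (Hc u H1).
    apply Rabs_def2 in Hc. lra.
  - destruct (cont_of_deriv z l t Hd (- z t) ltac:(lra)) as [d [Hd0 Hc]].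
    set (u := Rmax 0 (t - d/2)).
    assert (0 <= u < t /\ Rabs (u - t) < d).
    { unfold u, Rmax; destruct Rle_dec; split; try split; try lra;
      rewrite Rabs_left1 by lra; lra. }
    destruct H0. specialize (H u H0). specialize (Hc u H1).
    apply Rabs_def2 in Hc. lra.
Qed.

Lemma fwd01 z l t : derivable_pt_lim z t l -> 0 < z t < 1 ->
  exists d, d > 0 /\ forall u, t <= u < t + d -> 0 < z u < 1.
Proof.
  intros Hd Hz.
  destruct (cont_of_deriv z l t Hd (Rmin (z t) (1 - z t))) as [d [Hd0 Hc]].
  { unfold Rmin; destruct Rle_dec; lra. }
  exists d; split; auto. intros u Hu.
  assert (Rabs (u - t) < d) by (rewrite Rabs_right by lra; lra).
  specialize (Hc u H). apply Rabs_def2 in Hc.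
  unfold Rmin in Hc; destruct Rle_dec in Hc; lra.
Qed.

Lemma abs_le_btw a b : Rabs a <= b -> - b <= a <= b.
Proof. intros H. pose proof (Rle_abs a). pose proof (Rle_abs (-a)). rewrite Rabs_Ropp in H1. lra. Qed.

Lemma lipz z zd K t u : 0 <= t <= u -> (forall s, 0 <= s -> derivable_pt_lim z s (zd s)) ->
  (forall s, 0 <= s -> - K <= zd s <= K) -> Rabs (z u - z t) <= K * (u - t).
Proof.
  intros Htu Hd Hb. destruct (Req_dec t u) as [->|Hne].
  - unfold Rminus; rewrite !Rplus_opp_r, Rabs_R0; lra.
  - destruct (MVT_cor2 z zd t u ltac:(lra) (fun c Hc => Hd c ltac:(lra))) as [c [Hc Hct]].
    rewrite Hc. specialize (Hb c ltac:(lra)). rewrite Rabs_mult, (Rabs_right (u - t)) by lra.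
    apply Rmult_le_compat_r; [lra|]. apply Rabs_le; lra.
Qed.

Lemma core (x r xd rd : R -> R) sg K ka eps :
  (sg = 1 \/ sg = -1) -> 0 <= K -> ka > 0 -> eps > 0 ->
  (forall t, 0 <= t -> derivable_pt_lim x t (xd t)) ->
  (forall t, 0 <= t -> derivable_pt_lim r t (rd t)) ->
  (forall t, 0 <= t -> 0 < x t < 1) ->
  (forall t, 0 <= t -> - K <= xd t <= K /\ - K <= rd t <= K) ->
  (forall t, 0 <= t -> sg * xd t >= 0) ->
  (forall t, 0 <= t -> eps/2 <= x t <= 1 - eps/2 -> eps/2 <= r t <= 1 - eps/2 -> sg * xd t >= ka) ->
  (forall T, exists t, t >= T /\ eps <= x t <= 1 - eps /\ eps <= r t <= 1 - eps) -> False.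
Proof.
  intros Hsg HK Hka Heps Hdx Hdr Hx Hb Hmon Hst Hinf.
  assert (mono : forall s t, 0 <= s <= t -> sg * x s <= sg * x t).
  { intros s t Hst'. destruct (Req_dec s t) as [->|Hne]; [lra|].
    destruct (MVT_cor2 x xd s t ltac:(lra) (fun c Hc => Hdx c ltac:(lra))) as [c [Hc Hct]].
    specialize (Hmon c ltac:(lra)).
    assert (sg * (x t - x s) >= 0) by (rewrite Hc; nra). nra. }
  set (de := eps / (2 * (K + 1))).
  assert (Hde : de > 0) by (unfold de; apply Rdiv_lt_0_compat; lra).
  assert (HKde : K * de < eps / 2).
  { unfold de. apply (Rmult_lt_reg_r (2 * (K + 1))); [lra|].
    field_simplify; [nra|lra]. }
  assert (step : forall t, 0 <= t -> eps <= x t <= 1 - eps -> eps <= r t <= 1 - eps ->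
            sg * x (t + de) >= sg * x t + ka * de).
  { intros t Ht Hxt Hrt.
    destruct (MVT_cor2 x xd t (t + de) ltac:(lra) (fun c Hc => Hdx c ltac:(lra))) as [c [Hc Hct]].
    pose proof (lipz x xd K t c ltac:(lra) Hdx (fun s Hs => proj1 (Hb s Hs))) as L1.
    pose proof (lipz r rd K t c ltac:(lra) Hdr (fun s Hs => proj2 (Hb s Hs))) as L2.
    apply abs_le_btw in L1. apply abs_le_btw in L2.
    assert (K * (c - t) <= K * de) by (apply Rmult_le_compat_l; lra).
    specialize (Hst c ltac:(lra) ltac:(lra) ltac:(lra)).
    assert (sg * (x (t + de) - x t) >= ka * de).
    { rewrite Hc. replace (t + de - t) with de by ring. nra. }
    lra. }
  assert (ind : forall n, exists t, 0 <= t /\ sg * x t >= sg * x 0 + INR n * (ka * de)).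
  { induction n as [|n [t [Ht IH]]].
    - exists 0. simpl. split; lra.
    - destruct (Hinf t) as [t' [Ht' [Hx' Hr']]].
      exists (t' + de). split; [lra|].
      pose proof (step t' ltac:(lra) Hx' Hr').
      pose proof (mono t t' ltac:(lra)).
      rewrite S_INR. lra. }
  destruct (INR_archimed (ka * de) 2) as [n Hn]. { apply Rmult_lt_0_compat; lra. }
  destruct (ind n) as [t [Ht Hxt]].
  pose proof (Hx t Ht). pose proof (Hx 0 ltac:(lra)).
  destruct Hsg; subst sg; lra.
Qed.

Lemma Ffun_eq a b c d y r : Ffun a b c d y r = y * (a r - c r) + (1 - y) * (b r - d r).
Proof. unfold Ffun; ring. Qed.
Lemma Gfun_eq e f g k x r : Gfun e f g k x r = x * (e r - g r) + (1 - x) * (f r - k r).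
Proof. unfold Gfun; ring. Qed.

Lemma dom_sig a b c d : weakly_dominant a b c d -> exists sg, (sg = 1 \/ sg = -1) /\
  (forall r, 0 <= r <= 1 -> sg * (a r - c r) >= 0 /\ sg * (b r - d r) >= 0) /\
  (forall r, 0 < r < 1 -> sg * (a r - c r) > 0 /\ sg * (b r - d r) > 0).
Proof.
  intros [[H1 H2]|[H1 H2]]; [exists 1|exists (-1)]; (split; [lra|split]);
  intros r Hr; try destruct (H1 r Hr); try destruct (H2 r Hr); lra.
Qed.

Theorem theorem1
  (a b c d e f g k : R -> R) (th1 th2 : R)
  (Ha : affine01 a) (Hb : affine01 b) (Hc : affine01 c) (Hd : affine01 d)
  (He : affine01 e) (Hf : affine01 f) (Hg : affine01 g) (Hk : affine01 k)
  (Hth1 : 0 < th1) (Hth2 : 0 < th2)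
  (Hdom1 : weakly_dominant a b c d) (Hdom2 : weakly_dominant e f g k)
  (x y r : R -> R)
  (Hx0 : 0 < x 0 < 1) (Hy0 : 0 < y 0 < 1) (Hr0 : 0 < r 0 < 1)
  (Hxd : forall t, 0 <= t ->
     derivable_pt_lim x t (x t * (1 - x t) * Ffun a b c d (y t) (r t)))
  (Hyd : forall t, 0 <= t ->
     derivable_pt_lim y t (y t * (1 - y t) * Gfun e f g k (x t) (r t)))
  (Hrd : forall t, 0 <= t ->
     derivable_pt_lim r t (r t * (1 - r t) * Hfun th1 th2 (x t) (y t))) :
  forall eps, eps > 0 -> exists T, forall t, t >= T ->
    Rabs (dist_bd (x t) (y t) (r t)) < eps.
Proof.
  destruct (aff_bound a Ha) as [Ba [Ba0 HBa]].
  destruct (aff_bound b Hb) as [Bb [Bb0 HBb]].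
  destruct (aff_bound c Hc) as [Bc [Bc0 HBc]].
  destruct (aff_bound d Hd) as [Bd [Bd0 HBd]].
  destruct (aff_bound e He) as [Be [Be0 HBe]].
  destruct (aff_bound f Hf) as [Bf [Bf0 HBf]].
  destruct (aff_bound g Hg) as [Bg [Bg0 HBg]].
  destruct (aff_bound k Hk) as [Bk [Bk0 HBk]].
  set (K := Ba + Bb + Bc + Bd + Be + Bf + Bg + Bk + 4 + th1 + th2).
  assert (HK : 0 <= K) by (unfold K; lra).
  assert (BF : forall yy rr, 0 <= yy <= 1 -> 0 <= rr <= 1 -> - K <= Ffun a b c d yy rr <= K).
  { intros yy rr Hy Hr. rewrite Ffun_eq. apply conv_bound; auto;
    destruct (HBa rr Hr); destruct (HBb rr Hr); destruct (HBc rr Hr); destruct (HBd rr Hr);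
    unfold K; lra. }
  assert (BG : forall xx rr, 0 <= xx <= 1 -> 0 <= rr <= 1 -> - K <= Gfun e f g k xx rr <= K).
  { intros xx rr Hy Hr. rewrite Gfun_eq. apply conv_bound; auto;
    destruct (HBe rr Hr); destruct (HBf rr Hr); destruct (HBg rr Hr); destruct (HBk rr Hr);
    unfold K; lra. }
  assert (BH : forall xx yy, 0 <= xx <= 1 -> 0 <= yy <= 1 -> - K <= Hfun th1 th2 xx yy <= K).
  { intros xx yy Hx Hy. unfold Hfun. unfold K. split; nra. }
  set (In := fun t => 0 < x t < 1 /\ 0 < y t < 1 /\ 0 < r t < 1).
  assert (Inv : forall t, 0 <= t -> In t).
  { apply cont_ind.
    - intros t Ht Hlt. destruct (Req_dec t 0) as [->|Ht0]. { unfold In; auto. }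
      assert (Hcl : forall u, 0 <= u <= t -> 0 <= x u <= 1 /\ 0 <= y u <= 1 /\ 0 <= r u <= 1).
      { intros u Hu. destruct (Req_dec u t) as [->|Hne].
        - repeat split;
          [ apply (closure01 x _ t (Hxd t Ht)) | apply (closure01 x _ t (Hxd t Ht))
          | apply (closure01 y _ t (Hyd t Ht)) | apply (closure01 y _ t (Hyd t Ht))
          | apply (closure01 r _ t (Hrd t Ht)) | apply (closure01 r _ t (Hrd t Ht)) ];
          try lra; intros v Hv; destruct (Hlt v Hv) as [? [? ?]]; auto.
        - destruct (Hlt u ltac:(lra)) as [? [? ?]]; repeat split; lra. }
      repeat split.
      1,2: apply (coord_int x (fun u => Ffun a b c d (y u) (r u)) K t HK Ht
             (fun u Hu => Hxd u ltac:(lra))); auto;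
           intros u Hu; destruct (Hcl u Hu) as [? [? ?]]; split; auto.
      1,2: apply (coord_int y (fun u => Gfun e f g k (x u) (r u)) K t HK Ht
             (fun u Hu => Hyd u ltac:(lra))); auto;
           intros u Hu; destruct (Hcl u Hu) as [? [? ?]]; split; auto.
      1,2: apply (coord_int r (fun u => Hfun th1 th2 (x u) (y u)) K t HK Ht
             (fun u Hu => Hrd u ltac:(lra))); auto;
           intros u Hu; destruct (Hcl u Hu) as [? [? ?]]; split; auto.
    - intros t Ht [H1 [H2 H3]].
      destruct (fwd01 x _ t (Hxd t Ht) H1) as [d1 [Hd1 G1]].
      destruct (fwd01 y _ t (Hyd t Ht) H2) as [d2 [Hd2 G2]].
      destruct (fwd01 r _ t (Hrd t Ht) H3) as [d3 [Hd3 G3]].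
      exists (Rmin d1 (Rmin d2 d3)). split.
      { unfold Rmin; repeat destruct Rle_dec; lra. }
      intros u Hu. pose proof (Rmin_l d1 (Rmin d2 d3)). pose proof (Rmin_r d1 (Rmin d2 d3)).
      pose proof (Rmin_l d2 d3). pose proof (Rmin_r d2 d3).
      split; [apply G1; lra|split; [apply G2; lra|apply G3; lra]]. }
  intros eps Heps.
  destruct (classic (exists T, forall t, t >= T -> Rabs (dist_bd (x t) (y t) (r t)) < eps)) as [|Hn];
    auto. exfalso.
  assert (Hinf : forall T, exists t, t >= T /\ eps <= x t <= 1 - eps /\ eps <= r t <= 1 - eps).
  { intros T. destruct (not_all_ex_not _ _ (not_ex_all_not _ _ Hn (Rmax T 0))) as [t Ht].
    apply imply_to_and in Ht. destruct Ht as [Ht1 Ht2].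
    assert (Ht0 : 0 <= t) by (pose proof (Rmax_r T 0); lra).
    assert (TT : t >= T) by (pose proof (Rmax_l T 0); lra).
    destruct (Inv t Ht0) as [I1 [I2 I3]].
    unfold dist_bd in Ht2.
    set (m := Rmin (Rmin (Rmin (x t) (1 - x t)) (Rmin (y t) (1 - y t))) (Rmin (r t) (1 - r t))) in *.
    assert (m >= eps).
    { assert (0 <= m) by (unfold m, Rmin; repeat destruct Rle_dec; lra).
      rewrite Rabs_right in Ht2 by lra. lra. }
    pose proof (Rmin_l (Rmin (Rmin (x t) (1 - x t)) (Rmin (y t) (1 - y t))) (Rmin (r t) (1 - r t))).
    pose proof (Rmin_r (Rmin (Rmin (x t) (1 - x t)) (Rmin (y t) (1 - y t))) (Rmin (r t) (1 - r t))).
    pose proof (Rmin_l (Rmin (x t) (1 - x t)) (Rmin (y t) (1 - y t))).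
    pose proof (Rmin_l (x t) (1 - x t)). pose proof (Rmin_r (x t) (1 - x t)).
    pose proof (Rmin_l (r t) (1 - r t)). pose proof (Rmin_r (r t) (1 - r t)).
    fold m in H0, H1.
    exists t. repeat split; lra. }
  destruct (Hinf 0) as [t0 [_ [Hx1 _]]].
  set (al := eps / 2).
  assert (Hal : 0 < al <= 1/4) by (unfold al; lra).
  destruct (dom_sig a b c d Hdom1) as [sg [Hsg [Hnn Hpos]]].
  pose proof (aff_sub a c sg Ha Hc) as A1. pose proof (aff_sub b d sg Hb Hd) as A2.
  set (mu := Rmin (Rmin (sg * (a al - c al)) (sg * (a (1 - al) - c (1 - al))))
                  (Rmin (sg * (b al - d al)) (sg * (b (1 - al) - d (1 - al))))).
  assert (Hmu : mu > 0).
  { destruct (Hpos al ltac:(lra)). destruct (Hpos (1 - al) ltac:(lra)).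
    unfold mu, Rmin; repeat destruct Rle_dec; lra. }
  assert (HsgF : forall yy rr, 0 <= yy <= 1 -> 0 <= rr <= 1 -> sg * Ffun a b c d yy rr >= 0).
  { intros yy rr Hy Hr. rewrite Ffun_eq. destruct (Hnn rr Hr). nra. }
  assert (HsgF2 : forall yy rr, 0 <= yy <= 1 -> al <= rr <= 1 - al -> sg * Ffun a b c d yy rr >= mu).
  { intros yy rr Hy Hr. rewrite Ffun_eq.
    pose proof (aff_min _ al rr A1 ltac:(lra) Hr) as M1.
    pose proof (aff_min _ al rr A2 ltac:(lra) Hr) as M2.
    simpl in M1, M2.
    assert (sg * (a rr - c rr) >= mu /\ sg * (b rr - d rr) >= mu).
    { unfold mu. revert M1 M2. unfold Rmin; repeat destruct Rle_dec; intros; lra. }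
    nra. }
  apply (core x r (fun t => x t * (1 - x t) * Ffun a b c d (y t) (r t))
               (fun t => r t * (1 - r t) * Hfun th1 th2 (x t) (y t)) sg K (al * al * mu) eps);
    auto.
  - apply Rmult_lt_0_compat; [|lra]. apply Rmult_lt_0_compat; lra.
  - intros t Ht; apply (Inv t Ht).
  - intros t Ht. destruct (Inv t Ht) as [I1 [I2 I3]].
    destruct (BF (y t) (r t) ltac:(lra) ltac:(lra)).
    destruct (BH (x t) (y t) ltac:(lra) ltac:(lra)).
    assert (0 <= x t * (1 - x t) <= 1) by (split; nra).
    assert (0 <= r t * (1 - r t) <= 1) by (split; nra).
    split; split; nra.
  - intros t Ht. destruct (Inv t Ht) as [I1 [I2 I3]].
    pose proof (HsgF (y t) (r t) ltac:(lra) ltac:(lra)).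
    assert (0 <= x t * (1 - x t)) by nra.
    replace (sg * (x t * (1 - x t) * Ffun a b c d (y t) (r t)))
      with (x t * (1 - x t) * (sg * Ffun a b c d (y t) (r t))) by ring.
    nra.
  - intros t Ht Hxt Hrt. destruct (Inv t Ht) as [I1 [I2 I3]].
    pose proof (HsgF2 (y t) (r t) ltac:(lra) Hrt).
    assert (al * al <= x t * (1 - x t)) by (unfold al in *; apply Rmult_le_compat; lra).
    replace (sg * (x t * (1 - x t) * Ffun a b c d (y t) (r t)))
      with (x t * (1 - x t) * (sg * Ffun a b c d (y t) (r t))) by ring.
    apply Rle_ge. apply Rmult_le_compat; try lra. nra.
Qed.
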